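(* Let $G$ be the 2-blowup of $F_3$. Then $\chi(G)=7$.
   Context: $F_3$ is the graph on $\{v_1,\dots,v_6,x,y,z\}$ where $v_1\cdots v_6v_1$ is an induced 6-cycle, $x$ is adjacent to $v_1,v_2,v_3$, $y$ to $v_3,v_4,v_5$, $z$ to $v_5,v_6,v_1$, $\{x,y,z\}$ is a triangle, and there are no other edges. The 2-blowup of $H$ is obtained by replacing each vertex $v$ of $H$ by a clique $Q_v$ of size 2, with $Q_u$ complete to $Q_v$ if $uv\in E(H)$ and no edges between $Q_u,Q_v$ otherwise. *)

(* Defs.v *)
From mathcomp Require Import all_boot.
Set Implicit Arguments. Unset Strict Implicit. Unset Printing Implicit Defensive.

(* Simple graphs are symmetric irreflexive boolean relations on a finType. *)

Definition proper_coloring (T : finType) (e : rel T) (k : nat) (f : T -> 'I_k) : bool :=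
  [forall u, forall v, e u v ==> (f u != f v)].

Definition colorable (T : finType) (e : rel T) (k : nat) : bool :=
  [exists f : {ffun T -> 'I_k}, proper_coloring e f].

(* Chromatic number: the least k (in 0..#|T|) such that e is k-colourable.
   For a loopless graph, k = #|T| always works, so this is the true minimum. *)
Definition chromatic_number (T : finType) (e : rel T) : nat :=
  find (colorable e) (iota 0 #|T|.+1).

(* The graph F_3 on 'I_9: v1..v6 = 0..5, x = 6, y = 7, z = 8. *)
Definition F3_edges : seq (nat * nat) :=
  [:: (0,1); (1,2); (2,3); (3,4); (4,5); (5,0);
      (6,0); (6,1); (6,2);
      (7,2); (7,3); (7,4);
      (8,4); (8,5); (8,0);
      (6,7); (7,8); (6,8)].

Definition F3 : rel 'I_9 := fun u v =>
  ((nat_of_ord u, nat_of_ord v) \in F3_edges) ||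
  ((nat_of_ord v, nat_of_ord u) \in F3_edges).

(* 2-blowup: each vertex v replaced by the clique Q_v = {(v,0),(v,1)};
   Q_u complete to Q_v iff uv is an edge, no edges otherwise. *)
Definition blowup2 (T : finType) (e : rel T) : rel (T * 'I_2) := fun p q =>
  ((p.1 == q.1) && (p.2 != q.2)) || e p.1 q.1.

(* Main.v *)
Require Import Defs.
From mathcomp Require Import all_boot.

Definition w (i : 'I_9) : nat :=
  match nat_of_ord i with 0 | 2 | 4 => 4 | 1 | 3 | 5 => 3 | _ => 6 end.

Lemma total_w : \sum_(p : 'I_9 * 'I_2) w p.1 = 78.
Proof. rewrite -(pair_big xpredT xpredT (fun i (j : 'I_2) => w i)) /=.
rewrite !big_ord_recl !big_ord0 /=. done. Qed.

Lemma key (A : {set 'I_9}) : (forall i j, F3 i j -> ~~ ((i \in A) && (j \in A))) ->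
  \sum_(i in A) w i <= 12.
Proof.
move=> H.
have -> : \sum_(i in A) w i = \sum_(0 <= k < 9) (inord k \in A) * w (inord k).
  rewrite big_mkcond /= big_mkord.
  by apply: eq_bigr => i _; rewrite inord_val; case: (i \in A); rewrite ?mul1n.
rewrite /index_iota /= !big_cons big_nil /w !inordK //.
have := H (inord 0) (inord 1) ltac:(by rewrite /F3 !inordK).
have := H (inord 1) (inord 2) ltac:(by rewrite /F3 !inordK).
have := H (inord 2) (inord 3) ltac:(by rewrite /F3 !inordK).
have := H (inord 3) (inord 4) ltac:(by rewrite /F3 !inordK).
have := H (inord 4) (inord 5) ltac:(by rewrite /F3 !inordK).
have := H (inord 5) (inord 0) ltac:(by rewrite /F3 !inordK).
have := H (inord 6) (inord 0) ltac:(by rewrite /F3 !inordK).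
have := H (inord 6) (inord 1) ltac:(by rewrite /F3 !inordK).
have := H (inord 6) (inord 2) ltac:(by rewrite /F3 !inordK).
have := H (inord 7) (inord 2) ltac:(by rewrite /F3 !inordK).
have := H (inord 7) (inord 3) ltac:(by rewrite /F3 !inordK).
have := H (inord 7) (inord 4) ltac:(by rewrite /F3 !inordK).
have := H (inord 8) (inord 4) ltac:(by rewrite /F3 !inordK).
have := H (inord 8) (inord 5) ltac:(by rewrite /F3 !inordK).
have := H (inord 8) (inord 0) ltac:(by rewrite /F3 !inordK).
have := H (inord 6) (inord 7) ltac:(by rewrite /F3 !inordK).
have := H (inord 7) (inord 8) ltac:(by rewrite /F3 !inordK).
have := H (inord 6) (inord 8) ltac:(by rewrite /F3 !inordK).
case: (inord 0 \in A); case: (inord 1 \in A); case: (inord 2 \in A); case: (inord 3 \in A); case: (inord 4 \in A); case: (inord 5 \in A); case: (inord 6 \in A); case: (inord 7 \in A); case: (inord 8 \in A); done.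
Qed.

Lemma class_bound k (f : 'I_9 * 'I_2 -> 'I_k) :
  proper_coloring (blowup2 F3) f -> forall c, \sum_(p | f p == c) w p.1 <= 12.
Proof.
move=> /forallP Hf c.
set S := [set p | f p == c].
have injS : {in S &, injective (fun p : 'I_9 * 'I_2 => p.1)}.
  move=> [a x] [b y]; rewrite !inE /= => /eqP fa /eqP fb eab; subst b.
  case: (eqVneq x y) => [->//|nxy].
  have := forallP (Hf (a, x)) (a, y).
  by rewrite /blowup2 /= eqxx nxy /= fa fb eqxx.
have -> : \sum_(p | f p == c) w p.1 = \sum_(p in S) w p.1.
  by apply: eq_bigl => p; rewrite inE.
rewrite -(big_imset w injS) /=.
apply: key => i j Hij; apply/andP => -[/imsetP [p pS ep] /imsetP [q qS eq]]; subst i j.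
have := forallP (Hf p) q.
move: pS qS; rewrite !inE => /eqP -> /eqP ->.
by rewrite /blowup2 Hij orbT eqxx.
Qed.

Lemma not_col k : k <= 6 -> ~~ colorable (blowup2 F3) k.
Proof.
move=> hk; apply/negP => /existsP [f Hf].
have E := total_w.
rewrite (partition_big (fun p : 'I_9 * 'I_2 => f p) xpredT) // in E.
have : \sum_(j < k) \sum_(i | xpredT i && (f i == j)) w i.1 <= \sum_(j < k) 12.
  apply: leq_sum => j _; rewrite (eq_bigl (fun i => f i == j)) //. exact: (@class_bound k (fun p => f p) Hf j).
rewrite E sum_nat_const card_ord.
move=> H2; have := leq_trans H2 (leq_mul hk (leqnn 12)).
by [].
Qed.

Definition tbl (i : nat) (b : nat) : nat :=
  match i, b with
  | 0, 0 => 4 | 0, _ => 6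
  | 1, 0 => 1 | 1, _ => 2
  | 2, 0 => 5 | 2, _ => 6
  | 3, 0 => 0 | 3, _ => 2
  | 4, 0 => 3 | 4, _ => 6
  | 5, 0 => 0 | 5, _ => 1
  | 6, 0 => 0 | 6, _ => 3
  | 7, 0 => 1 | 7, _ => 4
  | _, 0 => 2 | _, _ => 5
  end.

Definition mko (n k : nat) : 'I_n.+1 := Ordinal (ltn_pmod k (ltn0Sn n)).

Definition ords (n : nat) : seq 'I_n.+1 := [seq mko n i | i <- iota 0 n.+1].

Lemma mem_ords n (i : 'I_n.+1) : i \in ords n.
Proof.
apply/mapP; exists (val i); first by rewrite mem_iota /=.
by apply: val_inj; rewrite /= modn_small.
Qed.

Definition col (p : 'I_9 * 'I_2) : 'I_7 := mko 6 (tbl p.1 p.2).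

Lemma col_ok : all (fun a => all (fun b => all (fun x => all (fun y =>
   blowup2 F3 (a, x) (b, y) ==> (col (a, x) != col (b, y))) (ords 1)) (ords 1)) (ords 8)) (ords 8).
Proof. by vm_compute. Qed.

Lemma col7 : colorable (blowup2 F3) 7.
Proof.
apply/existsP; exists [ffun p => col p].
apply/forallP => -[a x]; apply/forallP => -[b y]; rewrite !ffunE.
move/allP: col_ok => /(_ a (@mem_ords 8 a)) /allP /(_ b (@mem_ords 8 b)) /allP /(_ x (@mem_ords 1 x)) /allP.
by move=> /(_ y (@mem_ords 1 y)).
Qed.

Theorem lemma5p5 : chromatic_number (blowup2 F3) = 7.
Proof.
rewrite /chromatic_number card_prod !card_ord /=.
have N k : k <= 6 -> colorable (blowup2 F3) k = false by move/not_col/negbTE.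
by rewrite (N 0) // (N 1) // (N 2) // (N 3) // (N 4) // (N 5) // (N 6) // col7.
Qed.
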